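(* Let $n\ge 2$ be even and $r\ge 1$, let $V=\{1,\dots,n\}$, $R=\{n+1,\dots,n+r\}$, and let $A^R=(a_{ij})_{i,j\in V\cup R}$ be a skew-symmetric complex matrix with zero column sums, with associated graphs $G^R$ (on $V\cup R$) and $G$ (on $V$). Let $\mathcal{M}$ be the set of perfect matchings of $G$. Let $\mathcal{F}$ be the set of spanning forests of $G^R$ satisfying Condition (C) (without reference matching), and for $M_0\in\mathcal{M}$ let $\mathcal{F}(M_0)$ be the set of spanning forests of $G^R$ compatible with $M_0$ satisfying Condition (C) relative to $M_0$. Then $$\mathcal{F}=\bigcup_{M_0\in\mathcal{M}}\mathcal{F}(M_0).$$
   Context: $G^R$ has vertex set $V\cup R$ and an edge $ij$ whenever $a_{ij}\ne0$; $G$ is its induced subgraph on $V$. A spanning forest of $G^R$ is a set $F$ of oriented edges of $G^R$ containing no cycle such that each vertex of $V$ has exactly one outgoing edge in $F$ and vertices of $R$ have none. $F$ is compatible with a perfect matching $M_0$ if, forgetting orientations, $F\supseteq M_0$. Trimming algorithm, applied to a spanning forest $F$: set $F_1=F$. At step $i\ge1$, let $\ell^i$ be the leaf of $F_i$ (vertex of $V$ with an outgoing edge in $F_i$ and no incoming edge in $F_i$) with the largest label. Follow the unique directed path in $F_i$ from $\ell^i$, stopping at the first vertex reached which is a vertex of $R$, or a fork (vertex with more than one incoming edge in $F_i$), or a vertex with label smaller than $\ell^i$; call it $\lambda_{\ell^i}$. Set $F_{i+1}=F_i\setminus\lambda_{\ell^i}$; stop when $F_{i+1}$ is empty, after $N$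 steps. Condition (C) (without reference matching): each path $\lambda_{\ell^1},\dots,\lambda_{\ell^N}$ has even length. Condition (C) relative to $M_0$: each such path has even length and its first edge belongs to $M_0$. *)

(* Defs.v *)
From mathcomp Require Import all_boot all_algebra.
From mathcomp Require Export complex.
From mathcomp Require Export Rstruct.
From Stdlib Require Rdefinitions.

Set Implicit Arguments.
Unset Strict Implicit.
Unset Printing Implicit Defensive.

Import GRing.Theory.
Local Open Scope ring_scope.

Notation Cplx := (Rdefinitions.R)[i].

(* The vertex with Rocq index k corresponds
   to the paper's label k+1: V = {0,..,n-1} (labels 1..n),
   R = {n,..,n+r-1} (labels n+1..n+r). *)

Section Forests.
Variables (n r : nat).
Local Notation T := ('I_(n + r)).
Variable A : 'M[Cplx]_(n + r).

Definition inV (v : T) : bool := (v < n)%N.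
Definition inR (v : T) : bool := (n <= v)%N.

Definition edgeGR (i j : T) : bool := A i j != 0.

Definition perfect_matching (M : {set {set T}}) : Prop :=
  (forall e, e \in M -> exists i j : T,
      [/\ e = [set i; j], i != j, inV i, inV j & edgeGR i j]) /\
  (forall v : T, inV v -> #|[set e in M | v \in e]| = 1%N).

Definition outs (F : {set T * T}) (v : T) := [set e in F | e.1 == v].
Definition ins (F : {set T * T}) (v : T) := [set e in F | e.2 == v].

Definition no_cycle (F : {set T * T}) : Prop :=
  forall (x : T) (p : seq T),
    path (fun a b => (a, b) \in F) x p -> p != [::] -> last x p != x.

Definition spanning_forest (F : {set T * T}) : Prop :=
  [/\ (forall e, e \in F -> edgeGR e.1 e.2),
      (forall v : T, inV v -> #|outs F v| = 1%N),
      (forall v : T, inR v -> #|outs F v| = 0%N) &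
      no_cycle F].

Definition compatible (F : {set T * T}) (M0 : {set {set T}}) : Prop :=
  forall i j : T, [set i; j] \in M0 -> ((i, j) \in F) || ((j, i) \in F).

Definition leafb (F : {set T * T}) (v : T) : bool :=
  [&& inV v, (0 < #|outs F v|)%N & #|ins F v| == 0%N].

Definition max_leaf (F : {set T * T}) : option T :=
  [pick v | leafb F v && [forall w, leafb F w ==> (w <= v)%N]].

Definition succ (F : {set T * T}) (v : T) : option T :=
  [pick w | (v, w) \in F].

Definition stopb (F : {set T * T}) (l w : T) : bool :=
  [|| inR w, (1 < #|ins F w|)%N | (w < l)%N].

Fixpoint follow (fuel : nat) (F : {set T * T}) (l v : T) : seq T :=
  match fuel with
  | 0 => [::]
  | S f =>
    match succ F v with
    | None => [::]
    | Some w => if stopb F l w then [:: w] else w :: follow f F l w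
    end
  end.

(* the path lambda_l, as the sequence of vertices after l; its length
   (number of edges) is the size of this sequence *)
Definition lambda (F : {set T * T}) (l : T) : seq T :=
  follow (n + r) F l l.

Definition path_edges (l : T) (p : seq T) : {set T * T} :=
  [set e | e \in zip (l :: p) p].

Fixpoint trim (fuel : nat) (F : {set T * T}) : seq (T * seq T) :=
  match fuel with
  | 0 => [::]
  | S f =>
    if F == set0 then [::] else
    match max_leaf F with
    | None => [::]
    | Some l => let p := lambda F l in
                (l, p) :: trim f (F :\: path_edges l p)
    end
  end.

Definition trimming (F : {set T * T}) : seq (T * seq T) := trim #|F| F.

Definition condC (F : {set T * T}) : bool :=
  all (fun lp => ~~ odd (size lp.2)) (trimming F).

Definition condC_rel (F : {set T * T}) (M0 : {set {set T}}) : bool :=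
  all (fun lp => ~~ odd (size lp.2) && ([set lp.1; head lp.1 lp.2] \in M0))
      (trimming F).

End Forests.

(* Main.v *)
Require Import Defs.
From mathcomp Require Import all_boot all_algebra.

Set Implicit Arguments.
Unset Strict Implicit.
Unset Printing Implicit Defensive.

Section Gen.
Variable T : finType.

Fixpoint pairs (x : T) (p : seq T) : seq {set T} :=
  match p with
  | y :: (z :: q) as p' => [set x; y] :: pairs z q
  | _ => [::]
  end.

Lemma zip_fst (x : T) (p : seq T) a b : (a, b) \in zip (x :: p) p -> a \in belast x p.
Proof.
elim: p x => [|y p IH] x //=.
rewrite in_cons => /orP[/eqP[-> _]|H]; first by rewrite mem_head.
by rewrite in_cons (IH y H) orbT.
Qed.

Lemma zip_path (e : rel T) (x : T) (p : seq T) a b : path e x p -> (a, b) \in zip (x :: p) p -> e a b.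
Proof.
elim: p x => [|y p IH] x //=.
move=> /andP[exy pp]; rewrite in_cons => /orP[/eqP[-> ->]|H] //.
exact: IH pp H.
Qed.

Lemma belast_zip (x : T) (p : seq T) a : a \in belast x p -> exists b, (a, b) \in zip (x :: p) p.
Proof.
elim: p x => [|y p IH] x //=.
rewrite in_cons => /orP[/eqP->|H]; first by exists y; rewrite mem_head.
by have [b Hb] := IH y H; exists b; rewrite in_cons Hb orbT.
Qed.

Lemma pairs_ind (P : T -> seq T -> Prop) :
  (forall x, P x [::]) -> (forall x y, P x [:: y]) ->
  (forall x y z q, P z q -> P x [:: y, z & q]) -> forall x p, P x p.
Proof.
move=> H0 H1 H2 x p.
have [k] := ubnP (size p); elim: k x p => [|k IH] x [|y [|z q]] //= Hs.
by apply: H2; apply: IH; rewrite -ltnS ltnW.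
Qed.

Lemma pairs_mem (x : T) (p : seq T) e : e \in pairs x p ->
  exists a b, [/\ e = [set a; b], (a, b) \in zip (x :: p) p,
                  a \in belast x p & b \in belast x p].
Proof.
move: x p e; apply: pairs_ind => [x|x y|x y z q IH] e //=.
rewrite in_cons => /orP[/eqP->|H].
  by exists x, y; rewrite !in_cons !eqxx /= orbT.
have [a [b [-> Hz Ha Hb]]] := IH _ H.
by exists a, b; rewrite !in_cons Hz Ha Hb !orbT.
Qed.

Lemma pairs_unique (x : T) (p : seq T) v : ~~ odd (size p) -> uniq (belast x p) ->
  v \in belast x p ->
  exists e0, [/\ e0 \in pairs x p, v \in e0 &
                 forall e, e \in pairs x p -> v \in e -> e = e0].
Proof.
move: x p v; apply: pairs_ind => [x|x y|x y z q IH] v //=.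
move=> Hodd /andP[Hx /andP[Hy Hu]].
rewrite !in_cons => Hv.
have Hoe : ~~ odd (size q) by move: Hodd => /=; rewrite ?negbK.
case Hxy: ((v == x) || (v == y)).
  exists [set x; y]; split.
  - by rewrite mem_head.
  - by rewrite !inE.
  move=> e; rewrite in_cons => /orP[/eqP->//|He] ve.
  have [a [b [Hab _ Ha Hb]]] := pairs_mem He.
  move: ve; rewrite Hab !inE => /orP[]/eqP Hva; subst.
    by case/orP: Hxy => /eqP Hw; subst; [move: Hx; rewrite !in_cons Ha orbT|rewrite Ha in Hy].
  by case/orP: Hxy => /eqP Hw; subst; [move: Hx; rewrite !in_cons Hb orbT|rewrite Hb in Hy].
have Hv' : v \in belast z q.
  by move: Hv Hxy; case: (v == x) => //=; case: (v == y).
have [e0 [H1 H2 H3]] := IH _ Hoe Hu Hv'.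
exists e0; split => //; first by rewrite in_cons H1 orbT.
move=> e; rewrite in_cons => /orP[/eqP->|He] ve; last exact: H3.
by move: ve Hxy; rewrite !inE => ->.
Qed.

Lemma pairs_notin (x : T) (p : seq T) v e : v \notin belast x p -> e \in pairs x p -> v \notin e.
Proof.
move=> Hv /pairs_mem [a [b [-> _ Ha Hb]]].
by rewrite !inE; apply/negP => /orP[]/eqP Hva; subst; rewrite ?Ha ?Hb in Hv.
Qed.

Lemma uniq_path (e : rel T) (x : T) (p : seq T) : path e x p ->
  (forall y q, path e y q -> q != [::] -> last y q != y) -> uniq (x :: p).
Proof.
move=> Hp Hc; elim: p x Hp => [|y p IH] x //= /andP[exy pp].
have := IH y pp; move=> /= -> ; rewrite andbT.
apply/negP => Hx.
have Hp : path e x (y :: p) by rewrite /= exy pp.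
move: (y :: p) Hp Hx => s Hp Hx.
case/splitPr: Hx Hp => p1 p2.
rewrite cat_path /= => /andP[H1 /andP[H2 _]].
have := Hc x (rcons p1 x).
rewrite rcons_path H1 H2 last_rcons eqxx /=.
by move=> /(_ isT); rewrite -size_eq0 size_rcons; move=> /(_ isT).
Qed.

End Gen.

Section Spec.
Variables (n r : nat) (A : 'M[Cplx]_(n + r)) (F0 : {set 'I_(n + r) * 'I_(n + r)}).
Hypothesis sf : spanning_forest A F0.
Let sf4 : [/\ (forall e, e \in F0 -> edgeGR A e.1 e.2),
      (forall v : 'I_(n + r), inV v -> #|outs F0 v| = 1%N),
      (forall v : 'I_(n + r), inR v -> #|outs F0 v| = 0%N) &
      no_cycle F0] := sf.
Local Notation T := ('I_(n + r)).

Lemma inVNR (v : T) : inV v = ~~ inR v.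
Proof. by rewrite /inV /inR -ltnNge. Qed.

Lemma F0_src (v w : T) : (v, w) \in F0 -> inV v.
Proof.
case: sf4 => _ _ HR _ H; rewrite inVNR; apply/negP => Hr.
have := HR v Hr; move/eqP; rewrite cards_eq0 => /eqP Ho.
have : (v, w) \in outs F0 v by rewrite inE H eqxx.
by rewrite Ho inE.
Qed.

Lemma F0_uniq (v a b : T) : (v, a) \in F0 -> (v, b) \in F0 -> a = b.
Proof.
move=> Ha Hb; have Hv := F0_src Ha.
case: sf4 => _ HV _ _; have /eqP /cards1P [e0 He0] := HV v Hv.
have : (v, a) \in outs F0 v by rewrite inE Ha eqxx.
have : (v, b) \in outs F0 v by rewrite inE Hb eqxx.
by rewrite He0 !inE => /eqP <- /eqP [->].
Qed.

Lemma F0_path (G : {set T * T}) (x : T) p :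
  G \subset F0 -> path (fun a b => (a, b) \in G) x p ->
  path (fun a b => (a, b) \in F0) x p.
Proof. by move=> HG; apply: sub_path => a b /(subsetP HG). Qed.

Lemma F0_cycle (x : T) p : path (fun a b => (a, b) \in F0) x p -> p != [::] -> last x p != x.
Proof. by case: sf4 => _ _ _; apply. Qed.

Lemma F0_noloop (a : T) : (a, a) \notin F0.
Proof.
apply/negP => H.
have := @F0_cycle a [:: a]; rewrite /= H eqxx; by move/(_ isT isT).
Qed.

Lemma leaf_exists (G : {set T * T}) : G \subset F0 -> G != set0 ->
  exists v, leafb G v.
Proof.
move=> HG /set0Pn [e0 He0].
pose E := fun a b : T => (a, b) \in G.
pose anc (v : T) := [set x | [exists u, ((x, u) \in G) && connect E u v]].
have P0 : (0 < #|outs G e0.1|)%N.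
  by rewrite card_gt0; apply/set0Pn; exists e0; rewrite inE He0 eqxx.
case: (@arg_minnP _ e0.1 (fun v => (0 < #|outs G v|)%N) (fun v => #|anc v|) P0) => v Pv Hmin.
exists v; rewrite /leafb Pv /=.
have [e He] : exists e, e \in outs G v by apply/set0Pn; rewrite -card_gt0.
move: He; rewrite inE => /andP[He /eqP Hev].
have Hv : inV v.
  by apply: (@F0_src v e.2); rewrite -Hev -surjective_pairing (subsetP HG).
rewrite Hv cards_eq0 /=; apply/eqP/setP => f; rewrite !inE.
apply/negP => /andP[Hf /eqP Hfv].
set u := f.1.
have Hu : (u, v) \in G by rewrite -Hfv -surjective_pairing.
have Pu : (0 < #|outs G u|)%N.
  by rewrite card_gt0; apply/set0Pn; exists (u, v); rewrite inE Hu eqxx.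
have := Hmin u Pu.
suff : (#|anc u| < #|anc v|)%N by rewrite ltnNge => /negbTE ->.
apply: proper_card; apply/properP; split.
  apply/subsetP => x; rewrite !inE => /existsP [w /andP[Hxw Hc]].
  apply/existsP; exists w; rewrite Hxw /=.
  by apply: connect_trans Hc (connect1 _).
exists u.
  by rewrite inE; apply/existsP; exists v; rewrite Hu connect0.
rewrite inE; apply/negP => /existsP [w /andP[Huw /connectP [p Hp Hl]]].
have := @F0_cycle u (w :: p).
by rewrite /= (subsetP HG _ Huw) (F0_path HG Hp) -Hl eqxx; move/(_ isT isT).
Qed.


Lemma max_leaf_some (G : {set T * T}) l : max_leaf G = Some l -> leafb G l.
Proof. by rewrite /max_leaf; case: pickP => // x /andP[H _] [<-]. Qed.

Lemma max_leaf_none (G : {set T * T}) : G \subset F0 -> G != set0 ->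
  exists l, max_leaf G = Some l.
Proof.
move=> HG HG0; have [v Hv] := leaf_exists HG HG0.
rewrite /max_leaf; case: pickP => [x _|Hn]; first by exists x.
exfalso.
case: (@arg_maxnP _ v (leafb G) (fun i : T => val i) Hv) => w Hw Hmax.
have := Hn w; rewrite Hw /=.
suff -> : [forall w0, leafb G w0 ==> (w0 <= w)%N] by [].
by apply/forallP => j; apply/implyP => Hj; exact: Hmax j Hj.
Qed.

Lemma follow_path k (G : {set T * T}) (l v : T) :
  path (fun a b => (a, b) \in G) v (follow k G l v).
Proof.
elim: k v => [|k IH] v //=.
rewrite /succ; case: pickP => [w Hw|_] //=.
by case: ifP => _ /=; rewrite Hw //= IH.
Qed.

Lemma follow_belast k (G : {set T * T}) (l v w : T) :
  w \in belast v (follow k G l v) -> w = v \/ ~~ inR w.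
Proof.
elim: k v => [|k IH] v //=.
rewrite /succ; case: pickP => [u Hu|_] //=.
case: ifP => Hs /=.
  by rewrite inE => /eqP; left.
rewrite inE => /orP[/eqP->|H]; first by left.
right; case: (IH u H) => // ->.
by move: Hs; rewrite /stopb; case: (inR u).
Qed.

Lemma follow_nonempty k (G : {set T * T}) (l v w : T) :
  (v, w) \in G -> follow k.+1 G l v != [::].
Proof.
move=> Hw /=; rewrite /succ; case: pickP => [u _|Hn]; first by case: ifP.
by have := Hn w; rewrite Hw.
Qed.

Lemma lambda_nonempty (G : {set T * T}) (l w : T) :
  (l, w) \in G -> lambda G l != [::].
Proof.
move=> Hw; rewrite /lambda.
have Hk : (n + r = (n + r).-1.+1)%N by rewrite prednK // (leq_ltn_trans (leq0n l) (ltn_ord l)).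
have := @follow_nonempty (n + r).-1 G l l w Hw; rewrite -Hk; exact.
Qed.


Lemma key f (G : {set T * T}) : G \subset F0 -> (#|G| <= f)%N ->
  all (fun lp => ~~ odd (size lp.2)) (trim f G) ->
  exists M : {set {set T}},
   [/\ forall e, e \in M -> exists a b : T,
          [/\ e = [set a; b], a != b, inV a, inV b & (a, b) \in G],
       forall v : T, inV v -> #|[set e in M | v \in e]| = #|outs G v| &
       all (fun lp => [set lp.1; head lp.1 lp.2] \in M) (trim f G)].
Proof.
have base : forall s : seq (T * seq T),
  exists M : {set {set T}},
   [/\ forall e, e \in M -> exists a b : T,
          [/\ e = [set a; b], a != b, inV a, inV b & (a, b) \in (set0 : {set T * T})],
       forall v : T, inV v -> #|[set e in M | v \in e]| = #|outs set0 v| &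
       all (fun lp => [set lp.1; head lp.1 lp.2] \in M) ([::] : seq (T * seq T))].
  move=> _; exists set0; split => //.
    by move=> e; rewrite inE.
  move=> v _; rewrite (_ : outs set0 v = set0); last by apply/setP=> e; rewrite !inE.
  by rewrite cards0; apply/eqP; rewrite cards_eq0; apply/eqP/setP => e; rewrite !inE.
elim: f G => [|f IH] G HG Hc Hall.
  have G0 : G = set0 by apply/eqP; rewrite -cards_eq0 -leqn0.
  by subst; have [M HM] := base [::]; exists M.
case: (eqVneq G set0) => [G0|HG0].
  subst; have -> : trim f.+1 (set0 : {set T * T}) = [::] by rewrite /= eqxx.
  by have [M HM] := base [::]; exists M.
have [l Hml] := max_leaf_none HG HG0.
have Hl := max_leaf_some Hml.
set p := lambda G l.
set G' := G :\: path_edges l p.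
have Htr : trim f.+1 G = (l, p) :: trim f G' by rewrite /= (negbTE HG0) Hml.
rewrite Htr /= in Hall |- *.
move/andP: Hall => [Hodd Hall].
have Hpath : path (fun a b => (a, b) \in G) l p := follow_path _ _ _ _.
have HlV : inV l by case/and3P: Hl.
have [w0 Hw0] : exists w, (l, w) \in G.
  case/and3P: Hl => _ Ho _.
  have [e He] : exists e, e \in outs G l by apply/set0Pn; rewrite -card_gt0.
  move: He; rewrite inE => /andP[He /eqP <-]; exists e.2.
  by rewrite -surjective_pairing.
have Hne : p != [::] := lambda_nonempty Hw0.
have Huniq : uniq (l :: p).
  apply: (uniq_path (F0_path HG Hpath)) => y q Hq Hn; exact: F0_cycle Hq Hn.
have Hub : uniq (belast l p).
  by move: Huniq; rewrite lastI rcons_uniq => /andP[].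
have HinV : forall w, w \in belast l p -> inV w.
  move=> w Hw; case: (@follow_belast (n + r) G l l w Hw) => [->//|].
  by rewrite inVNR.
have Hzip : forall a b, (a, b) \in zip (l :: p) p -> (a, b) \in G.
  by move=> a b; apply: zip_path Hpath.
have HPE : forall e, (e \in path_edges l p) = (e \in zip (l :: p) p).
  by move=> e; rewrite /path_edges inE.
have HG'G : G' \subset G by apply: subsetDl.
have [y [z [q Hpe]]] : exists y z q, p = [:: y, z & q].
  have : forall s : seq T, ~~ odd (size s) -> s != [::] -> exists y z q, s = [:: y, z & q].
    by case=> [|y [|z q]] // _ _; exists y, z, q.
  by apply.
have Hly : (l, y) \in zip (l :: p) p by rewrite Hpe /= mem_head.
have Hcard : (#|G'| <= f)%N.
  rewrite -ltnS; apply: leq_trans Hc; apply: proper_card; apply/properP; split => //.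
  exists (l, y); first exact: Hzip.
  by rewrite /G' inE HPE Hly.
have [M' [HM1 HM2 HM3]] := IH G' (subset_trans HG'G HG) Hcard Hall.
exists (M' :|: [set e in pairs l p]); split.
- move=> e; rewrite inE => /orP[He|He].
    have [a [b [-> Hab Ha Hb HabG]]] := HM1 e He.
    by exists a, b; split => //; exact: (subsetP HG'G).
  rewrite inE in He; have [a [b [-> Hz Ha Hb]]] := pairs_mem He.
  exists a, b; split => //; [|exact: HinV|exact: HinV|exact: Hzip].
  apply/eqP => Hab; subst; have := F0_noloop b.
  by rewrite (subsetP HG _ (Hzip _ _ Hz)).
- move=> v Hv; case Hvb: (v \in belast l p).
    have [b Hb] := belast_zip Hvb.
    have HvbG := Hzip _ _ Hb.
    have Houts : outs G v = [set (v, b)].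
      apply/setP => e; rewrite !inE; apply/andP/eqP => [[He /eqP He1]|->]; last by rewrite HvbG eqxx.
      move: He He1; case: e => [e1 e2] /= He He1; subst e1.
      by rewrite (F0_uniq (subsetP HG _ He) (subsetP HG _ HvbG)).
    have Houts' : outs G' v = set0.
      apply/setP => e; rewrite !inE; apply/negP => /andP[HeG' /eqP Hev].
      move/andP: HeG' => [Hnp HeG].
      move: Hnp HeG Hev; case: e => [e1 e2] /= Hnp HeG ?; subst e1.
      have Heq := F0_uniq (subsetP HG _ HeG) (subsetP HG _ HvbG); subst e2.
      by rewrite Hb in Hnp.
    have HM'0 : [set e in M' | v \in e] = set0.
      by apply/eqP; rewrite -cards_eq0 HM2 // Houts' cards0.
    have [e0 [H1 H2 H3]] := pairs_unique Hodd Hub Hvb.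
    have -> : [set e in M' :|: [set e in pairs l p] | v \in e] = [set e0].
      apply/setP => e; rewrite !inE; apply/idP/eqP.
        case/andP => /orP[He|He] ve; last exact: H3.
        have : e \in [set e in M' | v \in e] by rewrite inE He ve.
        by rewrite HM'0 inE.
      by move=> ->; rewrite H1 H2 orbT.
    by rewrite cards1 Houts cards1.
  have Houts : outs G' v = outs G v.
    apply/setP => e; rewrite !inE.
    case HeG: (e \in G); rewrite ?andbF //= andbT.
    case Hev: (e.1 == v); rewrite ?andbF //= andbT.
    apply/negP => Hz; move: Hz Hev; case: e {HeG} => [e1 e2] /= Hz /eqP Hev; subst e1.
    by rewrite (zip_fst Hz) in Hvb.
  have -> : [set e in M' :|: [set e in pairs l p] | v \in e] = [set e in M' | v \in e].
    apply/setP => e; rewrite !inE andb_orl.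
    case He: (e \in pairs l p); rewrite ?andbF ?orbF //.
    by rewrite (negbTE (pairs_notin (negbT Hvb) He)) andbF orbF.
  by rewrite HM2 // Houts.
- apply/andP; split.
    by rewrite Hpe /= !inE eqxx orbT.
  by apply/allP => lp Hlp; rewrite inE (allP HM3 _ Hlp).
Qed.

End Spec.

Theorem lemma8 (n r : nat) (A : 'M[Cplx]_(n + r)) :
  (2 <= n)%N -> ~~ odd n -> (1 <= r)%N ->
  (A^T = - A)%R ->
  (forall j : 'I_(n + r), (\sum_(i < n + r) A i j)%R = 0%R) ->
  forall F : {set 'I_(n + r) * 'I_(n + r)},
    (spanning_forest A F /\ condC F) <->
    (exists M0 : {set {set 'I_(n + r)}},
        perfect_matching A M0 /\
        [/\ spanning_forest A F, compatible F M0 & condC_rel F M0]).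
Proof.
move=> _ _ _ _ _ F; split.
  move=> [sfF HC].
  have [M [HM1 HM2 HM3]] := @key n r A F sfF #|F| F (subxx F) (leqnn _) HC.
  have := sfF; rewrite /spanning_forest => -[Hedge HV HR Hnc].
  exists M; split; [split|split] => //.
  - move=> e He; have [a [b [-> Hab Ha Hb HF]]] := HM1 e He.
    by exists a, b; split => //; exact: Hedge _ HF.
  - by move=> v Hv; rewrite HM2 // HV.
  - move=> i j Hij; have [a [b [Hab Hne _ _ HF]]] := HM1 _ Hij.
    have Hi : i \in [set a; b] by rewrite -Hab !inE eqxx.
    have Hj : j \in [set a; b] by rewrite -Hab !inE eqxx orbT.
    have Ha : a \in [set i; j] by rewrite Hab !inE eqxx.
    have Hb : b \in [set i; j] by rewrite Hab !inE eqxx orbT.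
    move: Hi Hj Ha Hb; rewrite !inE => /orP[]/eqP-> /orP[]/eqP->.
    + by move=> _ /orP[]/eqP Hba; rewrite Hba eqxx in Hne.
    + by rewrite HF.
    + by rewrite HF orbT.
    + by move=> /orP[]/eqP Hab' _; rewrite Hab' eqxx in Hne.
  - by apply/allP => lp Hlp; rewrite (allP HC _ Hlp) (allP HM3 _ Hlp).
move=> [M0 [_ [sfF _ HC]]]; split => //.
by apply/allP => lp Hlp; have /andP[] := allP HC _ Hlp.
Qed.
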